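(* Let $W:[0,\infty)\to\mathbb{R}$ be a bounded monotone $\mathcal{C}^1$ function with $W'$ bounded, let $\Omega(r)=r^{-2}\int_0^rW(s)s\,ds$, let $m\in\mathbb{Z}\setminus\{0\}$ and $s\in\mathbb{C}$ with $\mathrm{Re}(s)\ne0$, and set $\gamma(r)=s+im\Omega(r)$. Then the equation $-\partial_r\bigl(r^2\partial_r^*u\bigr)+\Bigl(m^2+\frac{imrW'(r)}{\gamma(r)}\Bigr)u=0$ on $(0,\infty)$ has no nontrivial solution $u\in H^1(\mathbb{R}_+,r\,dr)$.
   Context: $\partial_r^*=\partial_r+\frac1r$. This is the eigenvalue equation (for the radial velocity) of the linearization at a columnar vortex for two-dimensional perturbations ($k=0$). *)

(* Defs.v *)
From Stdlib Require Import Reals Lra ZArith.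
Open Scope R_scope.

Definition Cx : Type := (R * R)%type.
Definition Re (z : Cx) : R := fst z.
Definition Im (z : Cx) : R := snd z.
Definition RtoC (x : R) : Cx := (x, 0).
Definition C0 : Cx := (0, 0).
Definition Ci : Cx := (0, 1).
Definition Cadd (z w : Cx) : Cx := (Re z + Re w, Im z + Im w).
Definition Cmul (z w : Cx) : Cx :=
  (Re z * Re w - Im z * Im w, Re z * Im w + Im z * Re w).
Definition Cnorm2 (z : Cx) : R := Re z * Re z + Im z * Im z.
Definition Cinv (z : Cx) : Cx := (Re z / Cnorm2 z, - Im z / Cnorm2 z).
Definition Cdiv (z w : Cx) : Cx := Cmul z (Cinv w).

Definition Cderiv_at (f : R -> Cx) (x : R) (l : Cx) : Prop :=
  derivable_pt_lim (fun t => Re (f t)) x (Re l) /\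
  derivable_pt_lim (fun t => Im (f t)) x (Im l).

Definition C1_on_nonneg (W dW : R -> R) : Prop :=
  (forall r, 0 < r -> derivable_pt_lim W r (dW r)) /\
  (forall eps, 0 < eps -> exists delta, 0 < delta /\
     forall h, 0 < h < delta -> Rabs ((W h - W 0) / h - dW 0) < eps) /\
  (forall r, 0 <= r -> forall eps, 0 < eps -> exists delta, 0 < delta /\
     forall x, 0 <= x -> Rabs (x - r) < delta -> Rabs (dW x - dW r) < eps).

Definition bounded_on_nonneg (f : R -> R) : Prop :=
  exists B, forall r, 0 <= r -> Rabs (f r) <= B.

Definition monotone_on_nonneg (f : R -> R) : Prop :=
  (forall x y, 0 <= x -> x <= y -> f x <= f y) \/
  (forall x y, 0 <= x -> x <= y -> f y <= f x).

Definition is_Omega (W Om : R -> R) : Prop :=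
  forall r, 0 < r ->
    forall pr : Riemann_integrable (fun t => W t * t) 0 r,
      Om r = RiemannInt pr / (r * r).

(** u (with derivative du on (0,oo)) lies in H^1(R_+, r dr):
    \int_0^oo (|u|^2 + |u'|^2) r dr < oo, expressed as a uniform bound on the
    integrals over all compact subintervals [a,b] of (0,oo) (the integrand is
    continuous and nonnegative). *)
Definition in_H1_rdr (u du : R -> Cx) : Prop :=
  exists M, forall a b, 0 < a -> a <= b ->
    forall pr : Riemann_integrable
                  (fun r => (Cnorm2 (u r) + Cnorm2 (du r)) * r) a b,
      RiemannInt pr <= M.

Definition gamma (s : Cx) (m : Z) (Om : R -> R) (r : R) : Cx :=
  Cadd s (Cmul Ci (RtoC (IZR m * Om r))).

Definition coef (s : Cx) (m : Z) (Om dW : R -> R) (r : R) : Cx :=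
  Cadd (RtoC (IZR m * IZR m))
       (Cmul Ci (Cdiv (RtoC (IZR m * r * dW r)) (gamma s m Om r))).

(** u solves -d_r(r^2 d_r^* u) + coef u = 0 on (0,oo), where
    d_r^* u = u' + u/r, so r^2 d_r^* u = r^2 u' + r u. *)
Definition solves_eq (s : Cx) (m : Z) (Om dW : R -> R) (u du : R -> Cx) : Prop :=
  (forall r, 0 < r -> Cderiv_at u r (du r)) /\
  (forall r, 0 < r ->
     Cderiv_at (fun t => Cadd (Cmul (RtoC (t * t)) (du t)) (Cmul (RtoC t) (u t)))
               r (Cmul (coef s m Om dW r) (u r))).

(* Main.v *)
Require Import Defs.
From Stdlib Require Import Reals Lra ZArith.
From Coquelicot Require Import Rcomplements Rbar Hierarchy Continuity Derive RInt RInt_analysis.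
Open Scope R_scope.

Lemma locally_pos (x : R) (P : R -> Prop) : 0 < x -> (forall y, 0 < y -> P y) -> locally x P.
Proof.
  intros Hx HP. assert (H2 : 0 < x/2) by lra.
  exists (mkposreal _ H2). intros y Hy. apply HP.
  change (Rabs (y - x) < x/2) in Hy. apply Rabs_def2 in Hy. simpl in Hy. lra.
Qed.

Lemma mono_lem (f f' : R -> R) (a b : R) : a <= b ->
  (forall c, a <= c <= b -> derivable_pt_lim f c (f' c)) ->
  (forall c, a <= c <= b -> 0 <= f' c) -> f a <= f b.
Proof.
  intros Hab Hd Hp. destruct (Req_dec a b) as [->|Hne]; [lra|].
  destruct (MVT_cor2 f f' a b) as [c [Hc1 Hc2]]; [lra|exact Hd|].
  assert (0 <= f' c) by (apply Hp; lra). nra.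
Qed.

Lemma int_lem (h F F' : R -> R) (a b : R) : 0 < a -> a <= b ->
  (forall x, 0 < x -> continuity_pt h x) ->
  (forall x, a <= x <= b -> derivable_pt_lim F x (F' x)) ->
  (forall x, a <= x <= b -> F' x <= h x) ->
  forall pr : Riemann_integrable h a b, F b - F a <= RiemannInt pr.
Proof.
  intros Ha Hab Hc Hd Hle pr. rewrite <- RInt_Reals.
  assert (HP : forall x, a <= x <= b -> derivable_pt_lim (fun y => RInt h a y) x (h x)).
  { intros x Hx. apply is_derive_Reals.
    apply is_derive_RInt with (a := a).
    - apply locally_pos; [lra|]. intros y Hy. apply (RInt_correct (V:=R_CompleteNormedModule) h a y).
      apply ex_RInt_continuous. intros z Hz. apply continuity_pt_filterlim, Hc.
      destruct Hz as [Hz _]. apply Rlt_le_trans with (2 := Hz).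
      apply Rmin_case; lra.
    - apply continuity_pt_filterlim, Hc. lra. }
  assert (H := mono_lem (fun y => RInt h a y - F y) (fun y => h y - F' y) a b Hab).
  simpl in H. rewrite RInt_point in H. 
  assert (HH: zero - F a <= RInt h a b - F b).
  { apply H.
    - intros c Hc0. apply derivable_pt_lim_minus; auto.
    - intros c Hc0. specialize (Hle c Hc0). lra. }
  change (zero : R) with 0 in HH. lra.
Qed.

Lemma dmul f g x lf lg : derivable_pt_lim f x lf -> derivable_pt_lim g x lg ->
  derivable_pt_lim (fun t => f t * g t) x (lf * g x + f x * lg).
Proof. intros; apply (derivable_pt_lim_mult f g); auto. Qed.
Lemma dplus f g x lf lg : derivable_pt_lim f x lf -> derivable_pt_lim g x lg ->
  derivable_pt_lim (fun t => f t + g t) x (lf + lg).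
Proof. intros; apply (derivable_pt_lim_plus f g); auto. Qed.
Lemma dminus f g x lf lg : derivable_pt_lim f x lf -> derivable_pt_lim g x lg ->
  derivable_pt_lim (fun t => f t - g t) x (lf - lg).
Proof. intros; apply (derivable_pt_lim_minus f g); auto. Qed.
Lemma did x : derivable_pt_lim (fun t => t) x 1.
Proof. apply derivable_pt_lim_id. Qed.
Lemma dconst c x : derivable_pt_lim (fun _ => c) x 0.
Proof. apply derivable_pt_lim_const. Qed.
Lemma deq f x l l' : derivable_pt_lim f x l -> l = l' -> derivable_pt_lim f x l'.
Proof. intros H ->; exact H. Qed.

Lemma deriv_zero (G : R -> R) r0 l : 0 < r0 -> (forall t, 0 < t -> G t = 0) ->
  derivable_pt_lim G r0 l -> l = 0.
Proof.
  intros Hr HG Hd. destruct (Req_dec l 0) as [|Hl]; auto. exfalso.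
  assert (He : 0 < Rabs l / 2) by (apply Rabs_pos_lt in Hl; lra).
  destruct (Hd _ He) as [[del Hdel] Hdd]. simpl in Hdd.
  set (hh := Rmin (del/2) (r0/2)).
  assert (Hh : 0 < hh) by (unfold hh; apply Rmin_case; lra).
  assert (Hh2 : hh <= del/2) by apply Rmin_l.
  assert (Hh3 : hh <= r0/2) by apply Rmin_r.
  specialize (Hdd hh ltac:(lra)).
  rewrite Rabs_pos_eq in Hdd by lra. specialize (Hdd ltac:(lra)).
  rewrite !HG in Hdd by lra.
  replace ((0 - 0) / hh - l) with (- l) in Hdd by (field; lra).
  rewrite Rabs_Ropp in Hdd. apply Rabs_pos_lt in Hl. lra.
Qed.

Lemma cmul f g x : continuity_pt f x -> continuity_pt g x -> continuity_pt (fun t => f t * g t) x.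
Proof. intros; apply (continuity_pt_mult f g); auto. Qed.
Lemma cplus f g x : continuity_pt f x -> continuity_pt g x -> continuity_pt (fun t => f t + g t) x.
Proof. intros; apply (continuity_pt_plus f g); auto. Qed.
Lemma cminus f g x : continuity_pt f x -> continuity_pt g x -> continuity_pt (fun t => f t - g t) x.
Proof. intros; apply (continuity_pt_minus f g); auto. Qed.
Lemma cdiv f g x : continuity_pt f x -> continuity_pt g x -> g x <> 0 -> continuity_pt (fun t => f t / g t) x.
Proof. intros; apply (continuity_pt_div f g); auto. Qed.
Lemma cid x : continuity_pt (fun t => t) x.
Proof. apply continuity_pt_id. Qed.

Lemma alg1 t d x : 0 < t <= 1 -> (t*t*d + t*x) * (t*t*d + t*x) <= 2*(t*t)*(d*d + x*x).
Proof.
  intros Ht.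
  assert (H1 : (t*d + x) * (t*d+x) <= 2*(t*t*(d*d) + x*x)) by (assert (E: 2*(t*t*(d*d)+x*x) - (t*d+x)*(t*d+x) = (t*d-x)*(t*d-x)) by ring; pose proof (Rle_0_sqr (t*d-x)); unfold Rsqr in *; lra).
  assert (H2 : t*t*(d*d) <= d*d) by (assert (t*t <= 1) by nra; assert (0 <= d*d) by nra; nra).
  replace ((t*t*d + t*x) * (t*t*d + t*x)) with ((t*t) * ((t*d + x) * (t*d+x))) by ring.
  assert (0 <= t*t) by nra. nra.
Qed.

Lemma CS l X Y : (X + l * Y) * (X + l * Y) <= (1 + l*l) * (X*X + Y*Y).
Proof. assert (E : (1 + l*l) * (X*X + Y*Y) - (X + l * Y) * (X + l * Y) = (l*X - Y)*(l*X - Y)) by ring.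
  pose proof (Rle_0_sqr (l*X - Y)); unfold Rsqr in *; lra. Qed.

Lemma amgm P z tDL : 0 < P -> 0 < z -> P <= tDL * z -> 2 * P <= z * P + tDL.
Proof.
  intros HP Hz H.
  assert (z * (z*P + tDL - 2*P) >= 0).
  { assert (0 <= P * ((z-1)*(z-1))) by (apply Rmult_le_pos; [lra|apply Rle_0_sqr]).
    assert (E : z * (z*P + tDL - 2*P) = P * ((z-1)*(z-1)) + (tDL * z - P)) by ring. lra. }
  destruct (Rle_lt_dec (2*P) (z*P + tDL)); auto.
  assert (z * (z*P + tDL - 2*P) < 0) by (apply Rmult_pos_neg; lra). lra.
Qed.

Lemma Om_bound (W dW Om : R -> R) (B : R) :
  (forall r, 0 < r -> derivable_pt_lim W r (dW r)) ->
  (forall r, 0 <= r -> Rabs (W r) <= B) -> is_Omega W Om ->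
  forall r, 0 < r -> Rabs (Om r) <= B.
Proof.
  intros Hd HB HO r Hr.
  assert (HB0 : 0 <= B) by (specialize (HB 0 (Rle_refl 0)); pose proof (Rabs_pos (W 0)); lra).
  assert (HcW : forall x, 0 < x -> continuity_pt W x).
  { intros x Hx. apply derivable_continuous_pt. exists (dW x). apply Hd; auto. }
  set (g := fun t => W (Rabs t) * Rabs t).
  assert (Hg : forall x, continuity_pt g x).
  { intros x. destruct (Rtotal_order x 0) as [Hx|[Hx|Hx]].
    - apply continuity_pt_ext_loc with (f := fun t => W (- t) * (- t)).
      + assert (Hx' : 0 < - x) by lra. destruct (locally_pos (-x) (fun y => 0 < y) Hx' (fun y H => H)) as [e He].
        exists e. intros y Hy. unfold g. rewrite Rabs_left; auto.
        assert (0 < - y). { apply He. change (Rabs (-y - -x) < e). 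
          change (Rabs (y - x) < e) in Hy. replace (-y - -x) with (-(y-x)) by ring. rewrite Rabs_Ropp; auto. }
        lra.
      + apply (continuity_pt_mult (fun t => W (- t)) (fun t => - t)).
        * apply (continuity_pt_comp Ropp W). apply continuity_pt_opp, continuity_pt_id.
          apply HcW; lra.
        * apply continuity_pt_opp, continuity_pt_id.
    - subst x. unfold continuity_pt, continue_in, limit1_in, limit_in. intros eps Heps.
      exists (eps / (B + 1)). split. { apply Rdiv_lt_0_compat; lra. }
      intros y [_ Hy]. simpl in *. unfold R_dist in *. unfold g.
      rewrite Rabs_R0, Rmult_0_r, Rminus_0_r. rewrite Rminus_0_r in Hy.
      rewrite Rabs_mult, Rabs_Rabsolu.
      assert (H1 := HB (Rabs y) (Rabs_pos y)).
      apply Rle_lt_trans with ((B+1) * Rabs y).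
      + apply Rmult_le_compat_r; [apply Rabs_pos|lra].
      + apply Rmult_lt_reg_r with (/ (B+1)). { apply Rinv_0_lt_compat; lra. }
        replace ((B + 1) * Rabs y * / (B + 1)) with (Rabs y) by (field; lra). exact Hy.
    - apply continuity_pt_ext_loc with (f := fun t => W t * t).
      + destruct (locally_pos x (fun y => 0 < y) Hx (fun y H => H)) as [e He].
        exists e. intros y Hy. unfold g. rewrite Rabs_right; auto. left. apply He, Hy.
      + apply (continuity_pt_mult W (fun t => t)). apply HcW; auto. apply continuity_pt_id. }
  assert (prg : Riemann_integrable g 0 r) by (apply continuity_implies_RiemannInt; [lra|auto]).
  assert (pr : Riemann_integrable (fun t => W t * t) 0 r).
  { apply Riemann_integrable_ext with (2 := prg). intros x Hx.
    rewrite Rmin_left, Rmax_right in Hx by lra. unfold g. rewrite Rabs_right by lra. auto. }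
  rewrite (HO r Hr pr). rewrite <- RInt_Reals.
  assert (Hi := abs_RInt_le_const (fun t => W t * t) 0 r (B * r) (Rlt_le _ _ Hr) (ex_RInt_Reals_1 _ _ _ pr)).
  assert (Hi2 : Rabs (RInt (fun t => W t * t) 0 r) <= (r - 0) * (B * r)).
  { apply Hi. intros t Ht. rewrite Rabs_mult, (Rabs_right t) by lra.
    apply Rmult_le_compat; try lra. apply Rabs_pos. apply HB; lra. }
  unfold Rdiv. rewrite Rabs_mult, Rabs_inv, (Rabs_right (r*r)) by nra.
  apply Rmult_le_reg_r with (r*r). nra.
  rewrite Rmult_assoc, Rinv_l by nra. nra.
Qed.

Lemma incr_deriv (f : R -> R) r l : 0 < r -> (forall x y, 0 <= x -> x <= y -> f x <= f y) ->
  derivable_pt_lim f r l -> 0 <= l.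
Proof.
  intros Hr Hm Hd. destruct (Rle_lt_dec 0 l) as [|Hl]; auto. exfalso.
  assert (He : 0 < - l / 2) by lra.
  destruct (Hd _ He) as [[del Hdel] Hdd]. simpl in Hdd.
  specialize (Hdd (del/2) ltac:(lra)).
  rewrite Rabs_pos_eq in Hdd by lra. specialize (Hdd ltac:(lra)).
  assert (Hq : 0 <= (f (r + del/2) - f r) / (del/2)).
  { assert (f r <= f (r + del/2)) by (apply Hm; lra). unfold Rdiv. apply Rmult_le_pos; [lra|]. left; apply Rinv_0_lt_compat; lra. }
  apply Rabs_def2 in Hdd. lra.
Qed.

Lemma dW_sign (W dW : R -> R) : (forall r, 0 < r -> derivable_pt_lim W r (dW r)) ->
  monotone_on_nonneg W -> exists e, (e = 1 \/ e = -1) /\ forall r, 0 < r -> 0 <= e * dW r.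
Proof.
  intros Hd [Hm|Hm].
  - exists 1. split; auto. intros r Hr. rewrite Rmult_1_l. apply (incr_deriv W r); auto.
  - exists (-1). split; auto. intros r Hr.
    assert (0 <= - dW r).
    { apply (incr_deriv (fun t => - W t) r); auto.
      - intros x y Hx Hy. specialize (Hm x y Hx Hy). lra.
      - apply (derivable_pt_lim_opp W). auto. }
    lra.
Qed.

Theorem proposition2p3 (W dW Om : R -> R) (m : Z) (s : Cx) (u du : R -> Cx) :
  C1_on_nonneg W dW ->
  bounded_on_nonneg W ->
  monotone_on_nonneg W ->
  bounded_on_nonneg dW ->
  is_Omega W Om ->
  m <> 0%Z ->
  Re s <> 0 ->
  solves_eq s m Om dW u du ->
  in_H1_rdr u du ->
  forall r, 0 < r -> u r = C0.
Proof.
  intros HC1 HWb Hmon HdWb HOm Hm Hs [Hd HV] [M HM] r0 Hr0.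
  destruct HC1 as [HW' _].
  destruct HWb as [BW HBW].
  assert (HOmb := Om_bound W dW Om BW HW' HBW HOm).
  assert (HBW0 : 0 <= BW) by (specialize (HBW 0 (Rle_refl 0)); pose proof (Rabs_pos (W 0)); lra).
  destruct (dW_sign W dW HW' Hmon) as [eW [HeW HeWp]].
  set (a := Re s) in *. set (bs := Im s).
  set (mm := IZR m).
  assert (Hmm : mm <> 0) by (apply not_0_IZR; auto).
  assert (Hsig : exists sg, (sg = 1 \/ sg = -1) /\ forall t, 0 < t -> 0 <= sg * a * (mm * t * dW t)).
  { destruct (Rle_lt_dec 0 (a*mm)) as [H|H].
    - exists eW. split; auto. intros t Ht. specialize (HeWp t Ht).
      replace (eW * a * (mm * t * dW t)) with ((a*mm) * t * (eW * dW t)) by ring.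
      apply Rmult_le_pos; [apply Rmult_le_pos|]; lra.
    - exists (-eW). split; [destruct HeW as [-> | ->]; [right|left]; ring|].
      intros t Ht. specialize (HeWp t Ht).
      replace (- eW * a * (mm * t * dW t)) with ((- (a*mm)) * t * (eW * dW t)) by ring.
      apply Rmult_le_pos; [apply Rmult_le_pos|]; lra. }
  destruct Hsig as [sg [Hsg Hsgp]].
  assert (Ha : 0 < Rabs a) by (apply Rabs_pos_lt; auto).
  set (K := (Rabs bs + Rabs mm * BW + 1) / Rabs a).
  set (lam := sg * K).
  set (Lam := 1 + lam * lam).
  set (u1 := fun t => Re (u t)) in *. set (u2 := fun t => Im (u t)) in *.
  set (d1 := fun t => Re (du t)) in *. set (d2 := fun t => Im (du t)) in *.
  set (Vf := fun t => Cadd (Cmul (RtoC (t * t)) (du t)) (Cmul (RtoC t) (u t))) in *.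
  set (V1 := fun t => Re (Vf t)) in *. set (V2 := fun t => Im (Vf t)) in *.
  set (c1 := fun t => Re (coef s m Om dW t)). set (c2 := fun t => Im (coef s m Om dW t)).
  assert (HV1 : forall t, V1 t = t * t * d1 t + t * u1 t).
  { intros t. unfold V1, Vf, d1, u1, Cadd, Cmul, RtoC, Re, Im; simpl. ring. }
  assert (HV2 : forall t, V2 t = t * t * d2 t + t * u2 t).
  { intros t. unfold V2, Vf, d2, u2, Cadd, Cmul, RtoC, Re, Im; simpl. ring. }
  set (bg := fun t => bs + mm * Om t).
  set (N := fun t => a * a + bg t * bg t).
  assert (HN : forall t, 0 < N t).
  { intros t. unfold N. assert (a <> 0) by auto. pose proof (Rle_0_sqr (bg t)). unfold Rsqr in *.
    assert (0 < a * a) by (apply Rsqr_pos_lt; auto). lra. }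
  assert (Hc1 : forall t, c1 t = mm * mm + (mm * t * dW t) * bg t / N t).
  { intros t. specialize (HN t). unfold c1, N, bg, coef, gamma, Cadd, Cmul, Cdiv, Cinv, Cnorm2, Ci, RtoC, Re, Im in *; simpl in *.
    unfold a, bs, mm, Re, Im in *. field. lra. }
  assert (Hc2 : forall t, c2 t = (mm * t * dW t) * a / N t).
  { intros t. specialize (HN t). unfold c2, N, bg, coef, gamma, Cadd, Cmul, Cdiv, Cinv, Cnorm2, Ci, RtoC, Re, Im in *; simpl in *.
    unfold a, bs, mm, Re, Im in *. field. lra. }

  assert (Hcl : forall t, 0 < t -> mm * mm <= c1 t + lam * c2 t).
  { intros t Ht. rewrite Hc1, Hc2. set (X := mm * t * dW t).
    assert (HX : 0 <= sg * a * X) by (apply Hsgp; auto).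
    assert (Habs : sg * a * X = Rabs a * Rabs X).
    { rewrite <- (Rabs_pos_eq _ HX). rewrite !Rabs_mult.
      assert (Hs1 : Rabs sg = 1) by (destruct Hsg as [-> | ->]; [apply Rabs_R1| rewrite Rabs_left; lra]).
      rewrite Hs1; ring. }
    assert (Hbg : Rabs (bg t) <= Rabs bs + Rabs mm * BW).
    { unfold bg. eapply Rle_trans; [apply Rabs_triang|]. rewrite Rabs_mult.
      apply Rplus_le_compat_l, Rmult_le_compat_l; [apply Rabs_pos|]. apply HOmb; auto. }
    assert (HK : K * Rabs a = Rabs bs + Rabs mm * BW + 1) by (unfold K; field; lra).
    assert (Hkey : 0 <= X * bg t + lam * (X * a)).
    { replace (lam * (X * a)) with (K * (sg * a * X)) by (unfold lam; ring). rewrite Habs.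
      replace (K * (Rabs a * Rabs X)) with ((K * Rabs a) * Rabs X) by ring. rewrite HK.
      assert (- (X * bg t) <= Rabs X * Rabs (bg t)).
      { rewrite <- Rabs_mult. apply Rle_trans with (Rabs (-(X*bg t))); [apply Rle_abs| rewrite Rabs_Ropp; lra]. }
      pose proof (Rabs_pos X). nra. }
    specialize (HN t).
    replace (mm * mm + X * bg t / N t + lam * (X * a / N t)) with (mm * mm + (X * bg t + lam * (X * a)) / N t) by (field; lra).
    assert (0 <= (X * bg t + lam * (X * a)) / N t) by (apply Rmult_le_pos; [auto|left; apply Rinv_0_lt_compat; auto]).
    lra. }
  set (G := fun t => t * (V1 t * u1 t + V2 t * u2 t) + lam * (t * (V2 t * u1 t - V1 t * u2 t))).
  set (D := fun t => (V1 t * V1 t + V2 t * V2 t) / t + t * (u1 t * u1 t + u2 t * u2 t) * (c1 t + lam * c2 t)).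
  assert (HGd : forall t, 0 < t -> derivable_pt_lim G t (D t)).
  { intros t Ht. destruct (Hd t Ht) as [Hu1 Hu2]. destruct (HV t Ht) as [Hv1 Hv2].
    assert (Hv1' : derivable_pt_lim V1 t (c1 t * u1 t - c2 t * u2 t)) by exact Hv1.
    assert (Hv2' : derivable_pt_lim V2 t (c1 t * u2 t + c2 t * u1 t)) by exact Hv2.
    assert (Hu1' : derivable_pt_lim u1 t (d1 t)) by exact Hu1.
    assert (Hu2' : derivable_pt_lim u2 t (d2 t)) by exact Hu2.
    clear Hv1 Hv2 Hu1 Hu2.
    unfold G. eapply deq.
    { apply dplus. apply dmul. apply did. apply dplus; apply dmul; eauto.
      apply dmul. apply dconst. apply dmul. apply did. apply dminus; apply dmul; eauto. }
    unfold D. cbv beta. rewrite (HV1 t), (HV2 t). field. lra. }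

  set (h := fun t => (Cnorm2 (u t) + Cnorm2 (du t)) * t).
  assert (Hh : forall t, h t = (u1 t * u1 t + u2 t * u2 t + (d1 t * d1 t + d2 t * d2 t)) * t) by reflexivity.
  assert (Hhc : forall t, 0 < t -> continuity_pt h t).
  { intros t Ht.
    assert (Hc : forall f l, (forall y, 0 < y -> derivable_pt_lim f y (l y)) -> continuity_pt f t).
    { intros f l Hf. apply derivable_continuous_pt. exists (l t). apply Hf; auto. }
    assert (Cu1 : continuity_pt u1 t) by (apply (Hc u1 d1); intros y Hy; exact (proj1 (Hd y Hy))).
    assert (Cu2 : continuity_pt u2 t) by (apply (Hc u2 d2); intros y Hy; exact (proj2 (Hd y Hy))).
    assert (CV1 : continuity_pt V1 t) by (apply (Hc V1 (fun y => Re (Cmul (coef s m Om dW y) (u y)))); intros y Hy; exact (proj1 (HV y Hy))).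
    assert (CV2 : continuity_pt V2 t) by (apply (Hc V2 (fun y => Im (Cmul (coef s m Om dW y) (u y)))); intros y Hy; exact (proj2 (HV y Hy))).
    assert (Cd1 : continuity_pt d1 t).
    { apply continuity_pt_ext_loc with (f := fun y => (V1 y - y * u1 y) / (y * y)).
      - apply locally_pos; auto. intros y Hy. rewrite HV1. field. lra.
      - apply cdiv; [apply cminus; [auto|apply cmul; [apply cid|auto]]|apply cmul; apply cid|nra]. }
    assert (Cd2 : continuity_pt d2 t).
    { apply continuity_pt_ext_loc with (f := fun y => (V2 y - y * u2 y) / (y * y)).
      - apply locally_pos; auto. intros y Hy. rewrite HV2. field. lra.
      - apply cdiv; [apply cminus; [auto|apply cmul; [apply cid|auto]]|apply cmul; apply cid|nra]. }
    change (continuity_pt (fun t => (u1 t * u1 t + u2 t * u2 t + (d1 t * d1 t + d2 t * d2 t)) * t) t).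
    repeat first [apply cmul | apply cplus | apply cid | assumption]. }
  assert (HGb : forall t, 0 < t -> G t * G t <= Lam * (t * t * (V1 t * V1 t + V2 t * V2 t) * (u1 t * u1 t + u2 t * u2 t))).
  { intros t Ht. unfold G, Lam.
    eapply Rle_trans; [apply CS|]. right. ring. }
  assert (HDl : forall t, 0 < t -> (V1 t * V1 t + V2 t * V2 t) / t + mm * mm * t * (u1 t * u1 t + u2 t * u2 t) <= D t).
  { intros t Ht. unfold D. specialize (Hcl t Ht).
    assert (0 <= t * (u1 t * u1 t + u2 t * u2 t)).
    { apply Rmult_le_pos; [lra|]. pose proof (Rle_0_sqr (u1 t)); pose proof (Rle_0_sqr (u2 t)); unfold Rsqr in *; lra. }
    assert (t * (u1 t * u1 t + u2 t * u2 t) * (mm*mm) <= t * (u1 t * u1 t + u2 t * u2 t) * (c1 t + lam * c2 t))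
      by (apply Rmult_le_compat_l; auto). nra. }
  assert (HD0 : forall t, 0 < t -> 0 <= D t).
  { intros t Ht. eapply Rle_trans; [|apply HDl; auto].
    assert (0 <= (V1 t * V1 t + V2 t * V2 t) / t).
    { apply Rmult_le_pos; [|left; apply Rinv_0_lt_compat; auto].
      pose proof (Rle_0_sqr (V1 t)); pose proof (Rle_0_sqr (V2 t)); unfold Rsqr in *; lra. }
    assert (0 <= mm * mm * t * (u1 t * u1 t + u2 t * u2 t)).
    { apply Rmult_le_pos; [apply Rmult_le_pos; [apply Rle_0_sqr|lra]|].
      pose proof (Rle_0_sqr (u1 t)); pose proof (Rle_0_sqr (u2 t)); unfold Rsqr in *; lra. }
    lra. }
  assert (Gmono : forall x y, 0 < x -> x <= y -> G x <= G y).
  { intros x y Hx Hxy. apply (mono_lem G D x y Hxy).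
    - intros c Hc. apply HGd; lra.
    - intros c Hc. apply HD0; lra. }

  assert (HLam : 1 <= Lam) by (unfold Lam; pose proof (Rle_0_sqr lam); unfold Rsqr in *; lra).
  assert (PartP : forall T, 0 < T -> ~ 0 < G T).
  { intros T HT HGT.
    set (k := (Rabs M + 1 + Lam / G T) / 2).
    assert (Hk : 0 < k).
    { unfold k. assert (0 < Lam / G T) by (apply Rdiv_lt_0_compat; lra). pose proof (Rabs_pos M). lra. }
    set (R0 := T * exp k).
    assert (HR0 : T <= R0).
    { unfold R0. assert (1 <= exp k) by (left; rewrite <- exp_0; apply exp_increasing; lra). nra. }
    set (F := fun t => 2 * ln t + Lam / G t).
    set (F' := fun t => (0 * ln t + 2 * / t) + (0 * G t - D t * Lam) / (G t)²).
    assert (HGpos : forall t, T <= t -> 0 < G t).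
    { intros t Ht. apply Rlt_le_trans with (G T); [exact HGT|]. apply Gmono; lra. }
    assert (Hint := int_lem h F F' T R0 HT HR0 Hhc).
    assert (pr : Riemann_integrable h T R0) by (apply continuity_implies_RiemannInt; [auto|intros; apply Hhc; lra]).
    specialize (Hint ltac:(intros x Hx; unfold F, F'; apply dplus;
        [apply dmul; [apply dconst|apply derivable_pt_lim_ln; lra]
        |apply (derivable_pt_lim_div (fun _ => Lam) G); [apply dconst|apply HGd; lra|specialize (HGpos x ltac:(lra)); lra]])).
    assert (HF'le : forall x, T <= x <= R0 -> F' x <= h x).
    { intros x Hx. assert (Hx0 : 0 < x) by lra. specialize (HGpos x ltac:(lra)).
      set (P := G x * G x). set (U := u1 x * u1 x + u2 x * u2 x).
      set (A := V1 x * V1 x + V2 x * V2 x).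
      assert (HP : 0 < P) by (unfold P; nra).
      assert (HU0 : 0 <= U) by (unfold U; pose proof (Rle_0_sqr (u1 x)); pose proof (Rle_0_sqr (u2 x)); unfold Rsqr in *; lra).
      assert (HA0 : 0 <= A) by (unfold A; pose proof (Rle_0_sqr (V1 x)); pose proof (Rle_0_sqr (V2 x)); unfold Rsqr in *; lra).
      assert (HPb : P <= Lam * (x * x * A * U)) by (apply HGb; auto).
      assert (HAD : A <= x * D x).
      { specialize (HDl x Hx0). fold A U in HDl.
        assert (0 <= mm * mm * x * U) by (apply Rmult_le_pos; [apply Rmult_le_pos; [apply Rle_0_sqr|lra]|auto]).
        assert (A / x <= D x) by lra.
        apply Rmult_le_compat_l with (r := x) in H0; [|lra].
        replace (x * (A / x)) with A in H0 by (field; lra). exact H0. }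
      assert (HU : 0 < U).
      { destruct HU0 as [|HU0]; auto. rewrite <- HU0 in HPb. rewrite Rmult_0_r, Rmult_0_r in HPb. lra. }
      set (z := x * x * U).
      assert (Hz : 0 < z) by (unfold z; apply Rmult_lt_0_compat; [nra|auto]).
      assert (Hk1 : P <= (x * D x * Lam) * z).
      { apply Rle_trans with (Lam * (x*x*A*U)); auto. unfold z.
        replace (x * D x * Lam * (x * x * U)) with (Lam * (x*x*(x * D x)*U)) by ring.
        apply Rmult_le_compat_l; [lra|]. apply Rmult_le_compat_r; [lra|]. apply Rmult_le_compat_l; [nra|auto]. }
      assert (Ham := amgm P z (x * D x * Lam) HP Hz Hk1).
      rewrite Hh. fold U. unfold F'. unfold Rsqr. fold P.
      apply Rle_trans with (U * x).
      2:{ assert (0 <= (d1 x * d1 x + d2 x * d2 x)) by (pose proof (Rle_0_sqr (d1 x)); pose proof (Rle_0_sqr (d2 x)); unfold Rsqr in *; lra). nra. }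
      apply Rmult_le_reg_r with (x * P). nra.
      replace ((0 * ln x + 2 * / x + (0 * G x - D x * Lam) / P) * (x * P)) with (2 * P - x * D x * Lam) by (field; lra).
      replace (U * x * (x * P)) with (z * P) by (unfold z; ring). lra. }
    specialize (Hint HF'le pr).
    assert (HMb : RiemannInt pr <= M) by exact (HM T R0 HT HR0 pr).
    unfold F in Hint.
    assert (HlnR : ln R0 = ln T + k) by (unfold R0; rewrite ln_mult, ln_exp; [reflexivity|lra|apply exp_pos]).
    rewrite HlnR in Hint.
    assert (0 < Lam / G R0) by (apply Rdiv_lt_0_compat; [lra|apply HGpos; auto]).
    assert (M <= Rabs M) by apply Rle_abs.
    assert (Hk2 : 2 * k = Rabs M + 1 + Lam / G T) by (unfold k; lra).
    clear HF'le. revert Hint HMb H H0 Hk2. generalize (RiemannInt pr) (Lam / G R0) (Lam / G T) (ln T) k. intros. lra. }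

  assert (PartN : forall T, 0 < T -> ~ G T < 0).
  { intros T HT HGT.
    set (T1 := Rmin T 1).
    assert (HT1 : 0 < T1) by (unfold T1; apply Rmin_case; lra).
    assert (HT1a : T1 <= T) by apply Rmin_l.
    assert (HT1b : T1 <= 1) by apply Rmin_r.
    set (g0 := - G T).
    set (c := g0 / (2 * Lam)).
    assert (Hc : 0 < c) by (unfold c, g0; apply Rdiv_lt_0_compat; lra).
    assert (Hth : forall t, 0 < t <= T1 -> c <= t * h t).
    { intros t Ht.
      assert (HGt : G t <= G T) by (apply Gmono; lra).
      set (U := u1 t * u1 t + u2 t * u2 t). set (S2 := d1 t * d1 t + d2 t * d2 t).
      set (A := V1 t * V1 t + V2 t * V2 t).
      assert (HU0 : 0 <= U) by (unfold U; pose proof (Rle_0_sqr (u1 t)); pose proof (Rle_0_sqr (u2 t)); unfold Rsqr in *; lra).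
      assert (HS0 : 0 <= S2) by (unfold S2; pose proof (Rle_0_sqr (d1 t)); pose proof (Rle_0_sqr (d2 t)); unfold Rsqr in *; lra).
      assert (HA : A <= 2 * (t*t) * (S2 + U)).
      { unfold A, S2, U. rewrite HV1, HV2.
        pose proof (alg1 t (d1 t) (u1 t) ltac:(lra)). pose proof (alg1 t (d2 t) (u2 t) ltac:(lra)). lra. }
      assert (HGb' := HGb t ltac:(lra)). fold A U in HGb'.
      set (Q := t * h t).
      assert (HQ : Q = t * t * (U + S2)) by (unfold Q; rewrite Hh; fold U S2; ring).
      assert (HQ0 : 0 <= Q) by (rewrite HQ; apply Rmult_le_pos; nra).
      assert (HG2 : G t * G t <= 2 * Lam * (Q * Q)).
      { eapply Rle_trans; [exact HGb'|]. rewrite HQ.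
        assert (Ht2 : 0 <= t * t) by nra.
        assert (A * U <= 2 * (t*t) * (S2 + U) * (U + S2)).
        { assert (0 <= A) by (unfold A; pose proof (Rle_0_sqr (V1 t)); pose proof (Rle_0_sqr (V2 t)); unfold Rsqr in *; lra). apply Rmult_le_compat; lra. }
        replace (Lam * (t * t * A * U)) with (Lam * (t*t) * (A * U)) by ring.
        replace (2 * Lam * (t * t * (U + S2) * (t * t * (U + S2)))) with (Lam * (t*t) * (2 * (t*t) * (S2 + U) * (U + S2))) by ring.
        apply Rmult_le_compat_l; [nra|auto]. }
      assert (Hg0 : g0 * g0 <= G t * G t) by (unfold g0; nra).
      assert (Hcc : c * c * (2 * Lam) <= g0 * g0 / (2 * Lam) * 1).
      { unfold c. replace (g0 / (2 * Lam) * (g0 / (2 * Lam)) * (2 * Lam)) with (g0 * g0 / (2 * Lam)) by (field; lra).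
        lra. }
      assert (H2 : c * c <= Q * Q).
      { apply Rmult_le_reg_r with (2 * Lam); [lra|].
        apply Rle_trans with (g0 * g0 / (2 * Lam) * 1); auto.
        assert (g0 * g0 / (2 * Lam) <= g0 * g0) .
        { unfold Rdiv. assert (0 <= g0 * g0) by nra. assert (/ (2 * Lam) <= 1).
          { rewrite <- Rinv_1. apply Rinv_le_contravar; lra. } nra. }
        nra. }
      destruct (Rle_lt_dec c Q); auto. nra. }
    set (k := (Rabs M + 1) / c).
    assert (Hk : 0 < k) by (unfold k; apply Rdiv_lt_0_compat; [pose proof (Rabs_pos M); lra|auto]).
    set (a0 := T1 * exp (- k)).
    assert (Ha0 : 0 < a0) by (unfold a0; apply Rmult_lt_0_compat; [auto|apply exp_pos]).
    assert (Ha0b : a0 <= T1).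
    { unfold a0. assert (exp (-k) <= 1) by (left; rewrite <- exp_0; apply exp_increasing; lra). nra. }
    set (F := fun t => c * ln t).
    set (F' := fun t => 0 * ln t + c * / t).
    assert (pr : Riemann_integrable h a0 T1) by (apply continuity_implies_RiemannInt; [auto|intros; apply Hhc; lra]).
    assert (Hint := int_lem h F F' a0 T1 Ha0 Ha0b Hhc).
    specialize (Hint ltac:(intros x Hx; unfold F, F'; apply dmul; [apply dconst|apply derivable_pt_lim_ln; lra])).
    assert (HF'le : forall x, a0 <= x <= T1 -> F' x <= h x).
    { intros x Hx. specialize (Hth x ltac:(lra)). unfold F'.
      apply Rmult_le_reg_l with x; [lra|]. replace (x * (0 * ln x + c * / x)) with c by (field; lra). auto. }
    specialize (Hint HF'le pr).
    assert (HMb : RiemannInt pr <= M) by exact (HM a0 T1 Ha0 Ha0b pr).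
    unfold F in Hint.
    assert (Hln : ln a0 = ln T1 - k) by (unfold a0; rewrite ln_mult, ln_exp; [ring|lra|apply exp_pos]).
    rewrite Hln in Hint.
    assert (Hck : c * k = Rabs M + 1) by (unfold k; field; lra).
    assert (M <= Rabs M) by apply Rle_abs.
    revert Hint HMb Hck H. generalize (RiemannInt pr) (ln T1) k. intros. nra. }
  assert (HG0 : forall t, 0 < t -> G t = 0).
  { intros t Ht. destruct (Rtotal_order (G t) 0) as [H|[H|H]]; auto.
    - exfalso; exact (PartN t Ht H).
    - exfalso; exact (PartP t Ht H). }
  assert (HD : D r0 = 0) by (apply (deriv_zero G r0); auto).
  specialize (HDl r0 Hr0). rewrite HD in HDl.
  assert (0 <= (V1 r0 * V1 r0 + V2 r0 * V2 r0) / r0).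
  { apply Rmult_le_pos; [|left; apply Rinv_0_lt_compat; auto].
    pose proof (Rle_0_sqr (V1 r0)); pose proof (Rle_0_sqr (V2 r0)); unfold Rsqr in *; lra. }
  assert (Hmm2 : 0 < mm * mm) by (apply Rsqr_pos_lt; auto).
  assert (HU : u1 r0 * u1 r0 + u2 r0 * u2 r0 <= 0).
  { destruct (Rle_lt_dec (u1 r0 * u1 r0 + u2 r0 * u2 r0) 0) as [|Hp]; auto.
    assert (0 < mm * mm * r0 * (u1 r0 * u1 r0 + u2 r0 * u2 r0)) by (apply Rmult_lt_0_compat; [apply Rmult_lt_0_compat|]; auto). lra. }
  assert (E1 : u1 r0 = 0) by nra. assert (E2 : u2 r0 = 0) by nra.
  unfold u1, u2, Re, Im in E1, E2. unfold C0. destruct (u r0) as [p q]. simpl in *. subst. reflexivity.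
Qed.
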